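(* Let $\hat\mu_n=F(\hat m_n^1,\dots,\hat m_n^{l_1},m_n^{l_1+1},\dots,m_n^{l_1+l_2})$ be a moment-type estimator as in the context (conditions (i)–(iii)), and suppose in addition that $F$ is uniformly locally linearly approximable: there exist $N$, $C>0$, $\epsilon>0$ and, for each $n$, a matrix $dF_{m_n}\in\mathbb{R}^{k\times l_1}$ such that for all $n\ge N$ and all $\tilde m_{r}=(\tilde m^1,\dots,\tilde m^{l_1})'$ with $\|\tilde m_r-m_{n,r}\|_2^2<\epsilon$, $$\|F(\tilde m^1,\dots,\tilde m^{l_1},m_n^{l_1+1},\dots,m_n^{l_1+l_2})-F(m_n)-dF_{m_n}(\tilde m_r-m_{n,r})\|_2\le C\|\tilde m_r-m_{n,r}\|_2^2,$$ where $m_n=(m_n^1,\dots,m_n^{l_1+l_2})$ and $m_{n,r}=(m_n^1,\dots,m_n^{l_1})'$. Define the linearization $\hat\mu_n^L=F(m_n)+dF_{m_n}(\hat m_{n,r}-m_{n,r})$ with $\hat m_{n,r}=(\hat m_n^1,\dots,\hat m_n^{l_1})'$. If $|||\mathbf{D}|||_2/n\to0$, then $$\hat\mu_n-\hat\mu_n^L=o_p\Big(\sqrt{|||\mathbf{D}|||_2/n}\Big)=o_p(1),$$ and $$\mathrm{Var}(\hat\mu_n^L)=\frac1{n^2}z'\mathbf{D}z,\qquad z=\Big(\sum_{s=1}^{l_1}dF^s_{m_n}1_{kn}'\,\mathrm{diag}(\phi^s)\Big)'\in\mathbb{R}^{kn\times k},$$ where $dF^s_{m_n}\in\mathbb{R}^{k}$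 is the $s$-th column of $dF_{m_n}$. Moreover, if $\frac1n\|z\|_2^2=O(1)$ (Frobenius norm), then every entry of $\mathrm{Var}(\hat\mu_n^L)$ is $O(|||\mathbf{D}|||_2/n)$, and hence $O(1/n)$ if also $|||\mathbf{D}|||_2=O(1)$.
   Context: Setup: there are $k$ treatment arms and $n$ units; $k$ is fixed while $n\to\infty$ along a sequence of finite populations, each with its own randomized design. All probabilities, expectations, variances, $O_p$ and $o_p$ refer only to the randomness of the treatment assignment. $\mathbf{R}_{ai}\in\{0,1\}$ indicates that unit $i$ is assigned to arm $a$ (exactly one arm per unit); $\mathbf{R}$ is the $kn\times kn$ diagonal matrix with diagonal $(\mathbf{R}_{11},\dots,\mathbf{R}_{1n},\mathbf{R}_{21},\dots,\mathbf{R}_{kn})$; $\pi=\mathrm{E}[\mathbf{R}]$ with diagonal entries in $(0,1)$; $1_{kn}$ is the all-ones vector; $\mathbf{D}=\mathrm{Var}(\pi^{-1}\mathbf{R}1_{kn})$; $|||\cdot|||_2$ is the spectral norm; $\mathrm{diag}(v)$ is the diagonal matrix with diagonal $v$. Moment-type estimator: fixed integers $l_1\ge1,l_2\ge0$; for each $n$, nonrandom $\phi^1,\dots,\phi^{l_1+l_2}\in\mathbb{R}^{kn}$ and a map $F=F_n:\mathbb{R}^{l_1+l_2}\to\mathbb{R}^k$ with (i) $\hat\mu_n=F(\hat m_n^1,\dots,\hat m_n^{l_1},m_n^{l_1+1},\dots,m_n^{l_1+l_2})$, $\hat m_n^s=\frac1n1_{kn}'\pi^{-1}\mathbf{R}\phi^s$,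 $m_n^s=\frac1n1_{kn}'\phi^s$; (ii) there exist $N,C,\epsilon>0$ such that for $n\ge N$ and $\sum_{s\le l_1}(\tilde m^s-m_n^s)^2<\epsilon$, $\|F(\tilde m^1,\dots,\tilde m^{l_1},m_n^{l_1+1},\dots)-F(m_n)\|_2\le C\sqrt{\sum_{s\le l_1}(\tilde m^s-m_n^s)^2}$; (iii) $\frac1n\|\phi^s\|_2^2\le C'$ for all $s,n$. *)

(* Defs.v *)
From HB Require Import structures.
From mathcomp Require Import all_boot all_order all_algebra.
From mathcomp Require Import all_classical all_reals all_analysis.
Set Implicit Arguments. Unset Strict Implicit. Unset Printing Implicit Defensive.
Import Order.TTheory GRing.Theory Num.Theory.
Import numFieldNormedType.Exports.
Local Open Scope ring_scope.
Local Open Scope classical_set_scope.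

(* Units of R^{kn} are indexed by pairs (a, i) : 'I_k * 'I_n  (arm a, unit i).
   An assignment is a map w : 'I_n -> 'I_k (exactly one arm per unit);
   a randomized design for population n is a pmf P on {ffun 'I_n -> 'I_k}. *)

Section Defs.
Variable R : realType.
Variable k : nat.

Definition is_design n (P : {ffun 'I_n -> 'I_k} -> R) :=
  (forall w, 0 <= P w) /\ \sum_w P w = 1.

Definition Ex n (P : {ffun 'I_n -> 'I_k} -> R) (X : {ffun 'I_n -> 'I_k} -> R) :=
  \sum_w P w * X w.
Definition Cov n (P : {ffun 'I_n -> 'I_k} -> R) (X Y : {ffun 'I_n -> 'I_k} -> R) :=
  Ex P (fun w => (X w - Ex P X) * (Y w - Ex P Y)).
Definition Prob n (P : {ffun 'I_n -> 'I_k} -> R) (A : pred {ffun 'I_n -> 'I_k}) :=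
  \sum_(w | A w) P w.

Definition Rind n (w : {ffun 'I_n -> 'I_k}) (t : ('I_k * 'I_n)%type) : R :=
  (w t.2 == t.1)%:R.
Definition pidiag n (P : {ffun 'I_n -> 'I_k} -> R) (t : ('I_k * 'I_n)%type) :=
  Ex P (fun w => Rind w t).
Definition Dmat n (P : {ffun 'I_n -> 'I_k} -> R) (t t' : ('I_k * 'I_n)%type) :=
  Cov P (fun w => Rind w t / pidiag P t) (fun w => Rind w t' / pidiag P t').

Definition norm2 (I : finType) (x : I -> R) := Num.sqrt (\sum_i x i ^+ 2).
Definition specnorm n (M : ('I_k * 'I_n)%type -> ('I_k * 'I_n)%type -> R) :=
  sup [set norm2 (fun t => \sum_t' M t t' * x t') |
        x in [set x : ('I_k * 'I_n)%type -> R | norm2 x <= 1]].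

Definition mhat n (P : {ffun 'I_n -> 'I_k} -> R) (phi : ('I_k * 'I_n)%type -> R)
    (w : {ffun 'I_n -> 'I_k}) :=
  n%:R^-1 * \sum_t Rind w t / pidiag P t * phi t.
Definition mpop n (phi : ('I_k * 'I_n)%type -> R) := n%:R^-1 * \sum_t phi t.

Section Moment.
Variables (l1 l2 n : nat).
Variable phi : 'I_(l1 + l2) -> ('I_k * 'I_n)%type -> R.

Definition mvec : 'I_(l1 + l2) -> R := fun s => mpop (phi s).
Definition mvec_r : 'I_l1 -> R := fun j => mpop (phi (lshift l2 j)).
Definition mix (mt : 'I_l1 -> R) : 'I_(l1 + l2) -> R :=
  fun s => match fintype.split s with inl j => mt j | inr _ => mpop (phi s) end.
Definition dist2r (mt : 'I_l1 -> R) := \sum_j (mt j - mvec_r j) ^+ 2.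
Definition mhat_r (P : {ffun 'I_n -> 'I_k} -> R) (w : {ffun 'I_n -> 'I_k}) : 'I_l1 -> R :=
  fun j => mhat P (phi (lshift l2 j)) w.

Variable F : ('I_(l1 + l2) -> R) -> 'I_k -> R.
Variable dF : 'I_k -> 'I_l1 -> R.

Definition muhat P w : 'I_k -> R := F (mix (mhat_r P w)).
Definition muL P w : 'I_k -> R :=
  fun a => F mvec a + \sum_j dF a j * (mhat_r P w j - mvec_r j).
(* z = (sum_s dF^s 1' diag(phi^s))' : kn x k *)
Definition zmat (t : ('I_k * 'I_n)%type) (c : 'I_k) : R :=
  \sum_j dF c j * phi (lshift l2 j) t.
End Moment.

Definition o_p (P : forall n, {ffun 'I_n -> 'I_k} -> R)
    (X : forall n, {ffun 'I_n -> 'I_k} -> 'I_k -> R) (a : nat -> R) :=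
  forall eps : R, 0 < eps ->
    (fun n => Prob (P n) (fun w => eps * a n < norm2 (X n w))) @ \oo --> 0.

Definition bigO1 (x : nat -> R) := exists C : R, exists N : nat,
  forall n, (N <= n)%N -> `|x n| <= C.
End Defs.

(* Main.v *)
Require Import Defs.
From HB Require Import structures.
From mathcomp Require Import all_boot all_order all_algebra.
From mathcomp Require Import all_classical all_reals all_analysis.
From mathcomp Require Import ring lra.
Import Order.TTheory GRing.Theory Num.Theory.
Import numFieldNormedType.Exports.
Local Open Scope ring_scope.
Local Open Scope classical_set_scope.
Section Aux.
Context {R : realType}.

Lemma eqle (x y : R) : x = y -> x <= y.
Proof. by move=> ->. Qed.

Lemma norm2_ge0 {I : finType} (x : I -> R) : 0 <= norm2 x.
Proof. exact: sqrtr_ge0. Qed.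

Lemma sumsq_ge0 {I : finType} (x : I -> R) : 0 <= \sum_i x i ^+ 2.
Proof. by apply: sumr_ge0 => i _; exact: sqr_ge0. Qed.

Lemma norm2_sq {I : finType} (x : I -> R) : norm2 x ^+ 2 = \sum_i x i ^+ 2.
Proof. by rewrite /norm2 sqr_sqrtr // sumsq_ge0. Qed.

Lemma dsum_prod {I J : finType} (a : I -> R) (b : J -> R) :
  \sum_i \sum_j a i * b j = (\sum_i a i) * (\sum_j b j).
Proof. by rewrite mulr_suml; apply: eq_bigr => i _; rewrite mulr_sumr. Qed.

Lemma CS_sq {I : finType} (x y : I -> R) :
  (\sum_i x i * y i) ^+ 2 <= (\sum_i x i ^+ 2) * (\sum_i y i ^+ 2).
Proof.
have H : 0 <= \sum_i \sum_j (x i * y j - x j * y i) ^+ 2.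
  by apply: sumr_ge0 => i _; apply: sumr_ge0 => j _; exact: sqr_ge0.
have E : \sum_i \sum_j (x i * y j - x j * y i) ^+ 2 =
   2 * ((\sum_i x i ^+ 2) * (\sum_i y i ^+ 2) - (\sum_i x i * y i) ^+ 2).
  transitivity (\sum_i \sum_j (x i ^+ 2 * y j ^+ 2 + y i ^+ 2 * x j ^+ 2
                       - (2 * (x i * y i)) * (x j * y j))).
    by apply: eq_bigr => i _; apply: eq_bigr => j _; ring.
  under eq_bigr => i _ do rewrite sumrB big_split /=.
  rewrite sumrB big_split /= !dsum_prod -mulr_sumr.
  ring.
have : 0 <= (\sum_i x i ^+ 2) * (\sum_i y i ^+ 2) - (\sum_i x i * y i) ^+ 2.
  by rewrite -(@pmulr_rge0 _ 2) // -E.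
by rewrite subr_ge0.
Qed.
End Aux.
Section Aux2.
Context {R : realType}.

Lemma CS {I : finType} (x y : I -> R) :
  `|\sum_i x i * y i| <= norm2 x * norm2 y.
Proof.
rewrite -sqrtr_sqr /norm2 -sqrtrM ?sumsq_ge0 // ler_sqrt; last first.
  by apply: mulr_ge0; exact: sumsq_ge0.
exact: CS_sq.
Qed.

Lemma norm2_scale {I : finType} (c : R) (x : I -> R) :
  norm2 (fun i => c * x i) = `|c| * norm2 x.
Proof.
rewrite /norm2.
have -> : \sum_i (c * x i) ^+ 2 = c ^+ 2 * \sum_i x i ^+ 2.
  by rewrite mulr_sumr; apply: eq_bigr => i _; rewrite exprMn.
by rewrite sqrtrM ?sqr_ge0 // sqrtr_sqr.
Qed.

Lemma norm2_0 {I : finType} : norm2 (fun _ : I => (0:R)) = 0.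
Proof. by rewrite /norm2 big1 ?sqrtr0 // => i _; rewrite expr0n. Qed.

Lemma norm2_eq0 {I : finType} {x : I -> R} : norm2 x = 0 -> forall i, x i = 0.
Proof.
move=> h i.
have hs : \sum_i x i ^+ 2 = 0 by rewrite -norm2_sq h expr0n.
have := @psumr_eq0P _ _ xpredT (fun i => x i ^+ 2) (fun i _ => sqr_ge0 (x i)) hs i isT.
by move/eqP; rewrite sqrf_eq0 => /eqP.
Qed.

Variable k : nat.

Section Spec.
Variable n : nat.
Notation T := ('I_k * 'I_n)%type.
Variable M : T -> T -> R.

Definition Mx (x : T -> R) : T -> R := fun t => \sum_t' M t t' * x t'.

Definition Sset := [set norm2 (Mx x) | x in [set x : T -> R | norm2 x <= 1]].

Lemma Sset_has_sup : has_sup Sset.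
Proof.
split.
  exists (norm2 (Mx (fun=> 0))); exists (fun=> 0) => //=.
  by rewrite norm2_0.
exists (Num.sqrt (\sum_t \sum_t' M t t' ^+ 2)) => _ [x /= hx <-].
rewrite /norm2 ler_sqrt; last by apply: sumr_ge0 => t _; exact: sumsq_ge0.
apply: ler_sum => t _.
have hx2 : \sum_t' x t' ^+ 2 <= 1.
  rewrite -norm2_sq; apply: exprn_ile1 => //; exact: norm2_ge0.
rewrite /Mx; apply: le_trans (CS_sq (M t) x) _.
by rewrite -{2}(mulr1 (\sum_t' M t t' ^+ 2)); apply: ler_wpM2l => //; exact: sumsq_ge0.
Qed.

Lemma spec_ge0 : 0 <= specnorm M.
Proof.
apply: (sup_upper_bound Sset_has_sup).
exists (fun=> 0); first by rewrite /= norm2_0.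
have -> : Mx (fun=> 0) = fun=> 0.
  by apply/funext => t; rewrite /Mx big1 // => t' _; rewrite mulr0.
exact: norm2_0.
Qed.

Lemma spec_bound (x : T -> R) : norm2 (Mx x) <= specnorm M * norm2 x.
Proof.
have [c0|cpos] := eqVneq (norm2 x) 0.
  have -> : Mx x = fun=> 0.
    by apply/funext => t; rewrite /Mx big1 // => t' _; rewrite (norm2_eq0 c0) mulr0.
  by rewrite norm2_0 c0 mulr0.
have cgt : 0 < norm2 x by rewrite lt_neqAle eq_sym cpos norm2_ge0.
have h1 : norm2 (fun t => (norm2 x)^-1 * x t) <= 1.
  by rewrite norm2_scale ger0_norm ?invr_ge0 ?norm2_ge0 // mulVf.
have h2 : norm2 (Mx (fun t => (norm2 x)^-1 * x t)) <= specnorm M.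
  by apply: (sup_upper_bound Sset_has_sup); exists (fun t => (norm2 x)^-1 * x t).
have h3 : Mx (fun t => (norm2 x)^-1 * x t) = fun t => (norm2 x)^-1 * Mx x t.
  apply/funext => t; rewrite /Mx mulr_sumr; apply: eq_bigr => t' _; ring.
rewrite h3 norm2_scale ger0_norm ?invr_ge0 ?norm2_ge0 // in h2.
have := ler_wpM2r (ltW cgt) h2.
by rewrite mulrAC mulVf // mul1r.
Qed.

Lemma quad_bound (u v : T -> R) :
  `|\sum_t \sum_t' u t * M t t' * v t'| <= specnorm M * (norm2 u * norm2 v).
Proof.
have -> : \sum_t \sum_t' u t * M t t' * v t' = \sum_t u t * Mx v t.
  apply: eq_bigr => t _; rewrite /Mx mulr_sumr; apply: eq_bigr => t' _; ring.
apply: le_trans (CS _ _) _.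
rewrite mulrCA; apply: ler_wpM2l; first exact: norm2_ge0.
exact: spec_bound.
Qed.
End Spec.
End Aux2.
Section Prob.
Context {R : realType} {k n : nat}.
Notation W := {ffun 'I_n -> 'I_k}.
Variable P : W -> R.
Hypothesis HP : is_design P.

Lemma P_ge0 w : 0 <= P w. Proof. by case: HP. Qed.
Lemma P_sum1 : \sum_w P w = 1. Proof. by case: HP. Qed.

Lemma Ex_lin {I : finType} (c : R) (a : I -> R) (X : I -> W -> R) :
  Ex P (fun w => c + \sum_t a t * X t w) = c + \sum_t a t * Ex P (X t).
Proof.
rewrite /Ex.
under eq_bigr => w _ do rewrite mulrDr mulr_sumr.
rewrite big_split /= -mulr_suml P_sum1 mul1r; congr (_ + _).
rewrite exchange_big /=; apply: eq_bigr => t _; rewrite mulr_sumr.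
by apply: eq_bigr => w _; ring.
Qed.

Lemma Ex_dsum {I J : finType} (f : I -> J -> W -> R) :
  Ex P (fun w => \sum_t \sum_t' f t t' w) = \sum_t \sum_t' Ex P (f t t').
Proof.
rewrite /Ex.
under eq_bigr => w _ do rewrite mulr_sumr.
rewrite exchange_big /=; apply: eq_bigr => t _.
under eq_bigr => w _ do rewrite mulr_sumr.
by rewrite exchange_big.
Qed.

Lemma Cov_bilin {I J : finType} (c d : R) (a : I -> R) (b : J -> R)
  (X : I -> W -> R) (Y : J -> W -> R) :
  Cov P (fun w => c + \sum_t a t * X t w) (fun w => d + \sum_t b t * Y t w)
  = \sum_t \sum_t' a t * b t' * Cov P (X t) (Y t').
Proof.
rewrite /Cov !Ex_lin.
transitivity (Ex P (fun w => \sum_t \sum_t' a t * b t' *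
   ((X t w - Ex P (X t)) * (Y t' w - Ex P (Y t'))))); last first.
  rewrite Ex_dsum; apply: eq_bigr => t _; apply: eq_bigr => t' _.
  by rewrite /Ex mulr_sumr; apply: eq_bigr => w _; ring.
congr (Ex P _); apply/funext => w.
have -> : c + \sum_t a t * X t w - (c + \sum_t a t * Ex P (X t)) =
          \sum_t a t * (X t w - Ex P (X t)).
  by rewrite opprD addrACA subrr add0r -sumrB; apply: eq_bigr => t _; ring.
have -> : d + \sum_t b t * Y t w - (d + \sum_t b t * Ex P (Y t)) =
          \sum_t b t * (Y t w - Ex P (Y t)).
  by rewrite opprD addrACA subrr add0r -sumrB; apply: eq_bigr => t _; ring.
rewrite mulr_suml; apply: eq_bigr => t _; rewrite mulr_sumr.
apply: eq_bigr => t' _; ring.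
Qed.

Lemma Ex_scale (c : R) (f : W -> R) : Ex P (fun w => c * f w) = c * Ex P f.
Proof. by rewrite /Ex mulr_sumr; apply: eq_bigr => w _; ring. Qed.

Lemma Prob_ge0 (A : pred W) : 0 <= Prob P A.
Proof. by apply: sumr_ge0 => w _; exact: P_ge0. Qed.

Lemma Prob_union (A B C : pred W) :
  (forall w, A w -> B w || C w) -> Prob P A <= Prob P B + Prob P C.
Proof.
move=> h; rewrite /Prob (big_mkcond A) (big_mkcond B) (big_mkcond C) /= -big_split /=.
apply: ler_sum => w _.
have := h w; have := P_ge0 w.
by case: (A w); case: (B w); case: (C w) => //= p0 H; rewrite ?addr0 ?add0r ?lerDl ?lerDr //; try (by have := H isT); lra.
Qed.

Lemma Markov (Y : W -> R) (A : pred W) (s : R) :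
  (forall w, 0 <= Y w) -> (forall w, A w -> s <= Y w) ->
  s * Prob P A <= Ex P Y.
Proof.
move=> Y0 hA; rewrite /Prob /Ex mulr_sumr.
apply: le_trans (_ : \sum_(w | A w) P w * Y w <= _).
  apply: ler_sum => w Aw; rewrite mulrC; apply: ler_wpM2l; first exact: P_ge0.
  exact: hA.
rewrite [X in _ <= X](bigID A) /= lerDl.
by apply: sumr_ge0 => w _; apply: mulr_ge0; [exact: P_ge0 | exact: Y0].
Qed.

Lemma Prob_zero (Y : W -> R) :
  (forall w, 0 <= Y w) -> Ex P Y <= 0 -> Prob P (fun w => 0 < Y w) = 0.
Proof.
move=> Y0 hE.
have hnn : forall w, 0 <= P w * Y w by move=> w; apply: mulr_ge0; [exact: P_ge0|exact: Y0].
have hE0 : \sum_w P w * Y w = 0.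
  by apply/eqP; rewrite eq_le hE; apply: sumr_ge0 => w _.
rewrite /Prob big1 // => w Yw.
have := @psumr_eq0P _ _ xpredT (fun w => P w * Y w) (fun w _ => hnn w) hE0 w isT.
by move/eqP; rewrite mulf_eq0 (gt_eqF Yw) orbF => /eqP.
Qed.

Lemma tail_bound (Y : W -> R) (t c : R) :
  (forall w, 0 <= Y w) -> 0 <= t -> 0 <= c -> Ex P Y <= c * t ^+ 2 ->
  Prob P (fun w => t < Y w) <= c * t.
Proof.
move=> Y0 t0 c0 hE.
have [te|tpos] := eqVneq t 0.
  by move: hE; rewrite te expr0n /= mulr0 => hE; rewrite Prob_zero // mulr0.
have tgt : 0 < t by rewrite lt_neqAle eq_sym tpos t0.
have hM : t * Prob P (fun w => t < Y w) <= Ex P Y.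
  by apply: Markov => // w /ltW.
have : t * Prob P (fun w => t < Y w) <= t * (c * t) by rewrite (le_trans hM) // mulrCA -expr2.
by rewrite ler_pM2l.
Qed.

Lemma markov_ge (Y : W -> R) (s : R) :
  (forall w, 0 <= Y w) -> 0 < s -> Prob P (fun w => s <= Y w) <= Ex P Y / s.
Proof.
move=> Y0 s0; rewrite ler_pdivlMr // mulrC; exact: Markov.
Qed.

End Prob.
Section Main.
Context {R : realType} {k l1 l2 n : nat}.
Notation W := {ffun 'I_n -> 'I_k}.
Notation T := ('I_k * 'I_n)%type.
Variable P : W -> R.
Hypothesis HP : is_design P.
Hypothesis Hpi : forall t, 0 < pidiag P t < 1.
Variable phi : 'I_(l1 + l2) -> T -> R.

Lemma Ex_sum {I : finType} (f : I -> W -> R) :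
  Ex P (fun w => \sum_t f t w) = \sum_t Ex P (f t).
Proof.
rewrite /Ex.
under eq_bigr => w _ do rewrite mulr_sumr.
by rewrite exchange_big.
Qed.

Lemma Ex_Xr t : Ex P (fun w => Rind R w t / pidiag P t) = 1.
Proof.
have hp : pidiag P t != 0 by case/andP: (Hpi t) => h _; rewrite gt_eqF.
rewrite /Ex.
under eq_bigr => w _ do rewrite mulrA mulrC.
by rewrite -mulr_sumr mulVf.
Qed.

Lemma mhat_form (ph : T -> R) :
  (fun w => mhat P ph w) =
  (fun w => 0 + \sum_t (n%:R^-1 * ph t) * (Rind R w t / pidiag P t)).
Proof.
apply/funext => w; rewrite add0r /mhat mulr_sumr; apply: eq_bigr => t _; ring.
Qed.

Lemma Ex_mhat (ph : T -> R) : Ex P (fun w => mhat P ph w) = mpop ph.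
Proof.
rewrite mhat_form (Ex_lin _ HP) add0r /mpop mulr_sumr.
by apply: eq_bigr => t _; rewrite Ex_Xr mulr1.
Qed.

Lemma Var_mhat (ph : T -> R) :
  Cov P (fun w => mhat P ph w) (fun w => mhat P ph w) =
  \sum_t \sum_t' (n%:R^-1 * ph t) * Dmat P t t' * (n%:R^-1 * ph t').
Proof.
rewrite mhat_form (Cov_bilin _ HP).
by apply: eq_bigr => t _; apply: eq_bigr => t' _; rewrite /Dmat; ring.
Qed.

Lemma Var_mhat_bound (ph : T -> R) (C' : R) :
  n%:R^-1 * norm2 ph ^+ 2 <= C' ->
  Cov P (fun w => mhat P ph w) (fun w => mhat P ph w) <=
  C' * (specnorm (Dmat P) / n%:R).
Proof.
move=> hC.
rewrite Var_mhat; apply: le_trans (ler_norm _) _.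
apply: le_trans (quad_bound _ _ (Dmat P) _ _) _.
rewrite -expr2 norm2_scale ger0_norm ?invr_ge0 //.
have hs := spec_ge0 _ _ (Dmat P).
set s := specnorm _ in hs *; set N := norm2 ph in hC *.
have -> : s * (n%:R^-1 * N) ^+ 2 = (s / n%:R) * (n%:R^-1 * N ^+ 2).
  by rewrite !expr2; ring.
rewrite [X in _ <= X]mulrC; apply: ler_wpM2l => //.
by apply: mulr_ge0 => //; rewrite invr_ge0.
Qed.

Lemma Ex_dist2r (C' : R) :
  (forall s, n%:R^-1 * norm2 (phi s) ^+ 2 <= C') ->
  Ex P (fun w => dist2r phi (mhat_r phi P w)) <=
  (l1%:R * C') * (specnorm (Dmat P) / n%:R).
Proof.
move=> hC; rewrite /dist2r Ex_sum.
apply: le_trans (_ : \sum_(j < l1) C' * (specnorm (Dmat P) / n%:R) <= _).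
  apply: ler_sum => j _.
  have -> : (fun w => (mhat_r phi P w j - mvec_r phi j) ^+ 2) =
     (fun w => (mhat P (phi (lshift l2 j)) w - Ex P (fun w => mhat P (phi (lshift l2 j)) w)) *
               (mhat P (phi (lshift l2 j)) w - Ex P (fun w => mhat P (phi (lshift l2 j)) w))).
    by apply/funext => w; rewrite Ex_mhat expr2.
  exact: Var_mhat_bound.
by rewrite sumr_const card_ord le_eqVlt; apply/orP; left; apply/eqP; ring.
Qed.

Variable F : ('I_(l1 + l2) -> R) -> 'I_k -> R.
Variable dF : 'I_k -> 'I_l1 -> R.

Lemma muL_form a :
  (fun w => muL phi F dF P w a) =
  (fun w => (F (mvec phi) a - \sum_j dF a j * mvec_r phi j) +
     \sum_t (n%:R^-1 * zmat phi dF t a) * (Rind R w t / pidiag P t)).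
Proof.
apply/funext => w; rewrite /muL.
under eq_bigr => j _ do rewrite mulrBr.
have E : \sum_j dF a j * mhat_r phi P w j =
   \sum_t (n%:R^-1 * zmat phi dF t a) * (Rind R w t / pidiag P t).
  rewrite /mhat_r /mhat /zmat.
  under eq_bigr => j _ do rewrite mulr_sumr mulr_sumr.
  rewrite exchange_big /=; apply: eq_bigr => t _.
  rewrite mulr_sumr mulr_suml; apply: eq_bigr => j _; ring.
rewrite sumrB E; ring.
Qed.

Lemma Cov_muL a b :
  Cov P (fun w => muL phi F dF P w a) (fun w => muL phi F dF P w b)
  = (n%:R ^+ 2)^-1 * \sum_t \sum_t'
       zmat phi dF t a * Dmat P t t' * zmat phi dF t' b.
Proof.
rewrite !muL_form (Cov_bilin _ HP) mulr_sumr; apply: eq_bigr => t _.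
rewrite [RHS]mulr_sumr; apply/eq_bigr => t' _.
rewrite -exprVn expr2 /Dmat; ring.
Qed.
Lemma le_sum_one {I : finType} (f : I -> R) (i : I) :
  (forall j, 0 <= f j) -> f i <= \sum_j f j.
Proof.
move=> h; rewrite (bigD1 i) //= lerDl; apply: sumr_ge0 => j _; exact: h.
Qed.

Lemma Cov_muL_bound a b (B : R) : (0 < n)%N ->
  \sum_t \sum_c zmat phi dF t c ^+ 2 <= n%:R * B ->
  `|Cov P (fun w => muL phi F dF P w a) (fun w => muL phi F dF P w b)|
    <= B * (specnorm (Dmat P) / n%:R).
Proof.
move=> n0 hB; rewrite Cov_muL normrM ger0_norm ?invr_ge0 ?exprn_ge0 //.
set S := \sum_t \sum_c zmat phi dF t c ^+ 2 in hB *.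
have S0 : 0 <= S by apply: sumr_ge0 => t _; exact: sumsq_ge0.
have hz : forall c, norm2 (fun t => zmat phi dF t c) <= Num.sqrt S.
  move=> c; rewrite /norm2 ler_sqrt // ; apply: ler_sum => t _.
  by apply: (le_sum_one (fun c => zmat phi dF t c ^+ 2)) => j; exact: sqr_ge0.
have hs := spec_ge0 _ _ (Dmat P).
have hq := quad_bound _ _ (Dmat P) (fun t => zmat phi dF t a) (fun t => zmat phi dF t b).
have hprod : norm2 (fun t => zmat phi dF t a) * norm2 (fun t => zmat phi dF t b) <= S.
  rewrite -(sqr_sqrtr S0) expr2; apply: ler_pM => //; exact: norm2_ge0.
have hn : 0 < n%:R :> R by rewrite ltr0n.
apply: le_trans (_ : (n%:R ^+ 2)^-1 * (specnorm (Dmat P) * (n%:R * B)) <= _).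
  apply: ler_wpM2l; first by rewrite invr_ge0 exprn_ge0.
  apply: le_trans hq _; apply: ler_wpM2l => //; exact: le_trans hprod hB.
rewrite le_eqVlt; apply/orP; left; apply/eqP; field.
by rewrite gt_eqF.
Qed.

Lemma dist2r_ge0 mt : 0 <= dist2r phi mt.
Proof. by apply: sumr_ge0 => j _; exact: sqr_ge0. Qed.

Lemma op_bound (C e0 C' t c : R) :
  0 < C -> 0 < e0 ->
  (forall mt : 'I_l1 -> R, dist2r phi mt < e0 ->
       norm2 (fun a => F (mix phi mt) a - F (mvec phi) a
                       - \sum_j dF a j * (mt j - mvec_r phi j))
         <= C * dist2r phi mt) ->
  (forall s, n%:R^-1 * norm2 (phi s) ^+ 2 <= C') ->
  0 <= t -> 0 <= c ->
  C * ((l1%:R * C') * (specnorm (Dmat P) / n%:R)) <= c * t ^+ 2 ->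
  Prob P (fun w => t < norm2 (fun a => muhat phi F P w a - muL phi F dF P w a))
  <= (l1%:R * C') * (specnorm (Dmat P) / n%:R) / e0 + c * t.
Proof.
move=> C0 e00 hF hC t0 c0 hct.
set Kd := (l1%:R * C') * _ in hct *.
have hE := Ex_dist2r _ hC; rewrite -/Kd in hE.
apply: le_trans (Prob_union _ HP _ (fun w => e0 <= dist2r phi (mhat_r phi P w))
   (fun w => t < C * dist2r phi (mhat_r phi P w)) _) _.
  move=> w /= ht.
  case: (leP e0 (dist2r phi (mhat_r phi P w))) => //= hlt.
  apply: lt_le_trans ht _.
  have -> : (fun a => muhat phi F P w a - muL phi F dF P w a) =
     (fun a => F (mix phi (mhat_r phi P w)) a - F (mvec phi) a
          - \sum_j dF a j * (mhat_r phi P w j - mvec_r phi j)).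
    by apply/funext => a; rewrite /muhat /muL opprD addrA.
  exact: hF.
apply: lerD.
  apply: le_trans (markov_ge _ HP _ _ _ e00) _ => //; first by move=> w; exact: dist2r_ge0.
  by apply: ler_wpM2r => //; rewrite invr_ge0 ltW.
apply: tail_bound => //.
  by move=> w; apply: mulr_ge0; [exact: ltW | exact: dist2r_ge0].
rewrite Ex_scale; apply: le_trans hct; apply: ler_wpM2l => //; exact: ltW.
Qed.

End Main.
Theorem mainTheorem2 (R : realType) (k l1 l2 : nat)
  (P : forall n, {ffun 'I_n -> 'I_k} -> R)
  (phi : forall n, 'I_(l1 + l2) -> ('I_k * 'I_n)%type -> R)
  (F : forall n, ('I_(l1 + l2) -> R) -> 'I_k -> R)
  (dF : forall n, 'I_k -> 'I_l1 -> R) :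
  (0 < l1)%N ->
  (* randomized designs, pi with entries in (0,1) *)
  (forall n, is_design (P n)) ->
  (forall n t, 0 < pidiag (P n) t < 1) ->
  (* (ii) local Lipschitz condition on F *)
  (exists N : nat, exists C : R, exists eps : R, 0 < C /\ 0 < eps /\
     forall n, (N <= n)%N -> forall mt : 'I_l1 -> R,
       dist2r (phi n) mt < eps ->
       norm2 (fun a => F n (mix (phi n) mt) a - F n (mvec (phi n)) a)
         <= C * Num.sqrt (dist2r (phi n) mt)) ->
  (* (iii) *)
  (exists C' : R, forall n s, n%:R^-1 * norm2 (phi n s) ^+ 2 <= C') ->
  (* uniform local linear approximability *)
  (exists N : nat, exists C : R, exists eps : R, 0 < C /\ 0 < eps /\
     forall n, (N <= n)%N -> forall mt : 'I_l1 -> R,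
       dist2r (phi n) mt < eps ->
       norm2 (fun a => F n (mix (phi n) mt) a - F n (mvec (phi n)) a
                       - \sum_j dF n a j * (mt j - mvec_r (phi n) j))
         <= C * dist2r (phi n) mt) ->
  (* |||D|||_2 / n -> 0 *)
  (fun n : nat => specnorm (Dmat (P n)) / n%:R) @ \oo --> (0 : R) ->
  [/\ o_p P (fun n w a => muhat (phi n) (F n) (P n) w a - muL (phi n) (F n) (dF n) (P n) w a)
         (fun n => Num.sqrt (specnorm (Dmat (P n)) / n%:R)),
      o_p P (fun n w a => muhat (phi n) (F n) (P n) w a - muL (phi n) (F n) (dF n) (P n) w a)
         (fun _ => 1),
      (forall n, (0 < n)%N -> forall a b : 'I_k,
         Cov (P n) (fun w => muL (phi n) (F n) (dF n) (P n) w a)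
                   (fun w => muL (phi n) (F n) (dF n) (P n) w b)
         = (n%:R ^+ 2)^-1 * \sum_t \sum_t'
              zmat (phi n) (dF n) t a * Dmat (P n) t t' * zmat (phi n) (dF n) t' b)
    & bigO1 (fun n => n%:R^-1 * \sum_t \sum_c zmat (phi n) (dF n) t c ^+ 2) ->
      (exists C : R, exists N : nat, forall n, (N <= n)%N -> forall a b : 'I_k,
         `|Cov (P n) (fun w => muL (phi n) (F n) (dF n) (P n) w a)
                     (fun w => muL (phi n) (F n) (dF n) (P n) w b)|
           <= C * (specnorm (Dmat (P n)) / n%:R))
      /\ (bigO1 (fun n => specnorm (Dmat (P n))) ->
          exists C : R, exists N : nat, forall n, (N <= n)%N -> forall a b : 'I_k,
         `|Cov (P n) (fun w => muL (phi n) (F n) (dF n) (P n) w a)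
                     (fun w => muL (phi n) (F n) (dF n) (P n) w b)|
           <= C / n%:R)].
Proof.
move=> l1pos HP Hpi _ [C' hC'] [N [C [e0 [C0 [e00 hF]]]]] hd.
set d := fun n : nat => specnorm (Dmat (P n)) / n%:R.
have d0 : forall n, 0 <= d n.
  by move=> n; apply: mulr_ge0; [exact: spec_ge0 | rewrite invr_ge0].
have C'0 : 0 <= C'.
  by have := hC' 0%N (lshift l2 (Ordinal l1pos)); rewrite invr0 mul0r.
set K := l1%:R * C'.
have K0 : 0 <= K by apply: mulr_ge0.
have hsq : (fun n => Num.sqrt (d n)) @ \oo --> (0 : R).
  have := continuous_cvg _ (@sqrt_continuous R 0) hd; rewrite sqrtr0; exact.
split.
- move=> e e0pos.
  set c := C * K / e ^+ 2.
  have L : (fun n => K * d n / e0 + c * (e * Num.sqrt (d n))) @ \oo -->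
           (K * 0 / e0 + c * (e * 0)).
    apply: cvgD; first by apply: cvgMr_tmp; apply: cvgMl_tmp; exact: hd.
    by apply: cvgMl_tmp; apply: cvgMl_tmp; exact: hsq.
  rewrite !mulr0 mul0r addr0 in L.
  apply: (squeeze_cvgr _ (cvg_cst 0) L).
  exists N => // n /= hn; rewrite Prob_ge0 //=.
  apply: (op_bound _ (HP n) (Hpi n) _ _ _ _ _ _ _ _ C0 e00 (hF n hn) (hC' n)).
  + by apply: mulr_ge0; [exact: ltW | exact: sqrtr_ge0].
  + by apply: mulr_ge0; [apply: mulr_ge0 => //; exact: ltW | rewrite invr_ge0 exprn_ge0 // ltW].
  + rewrite exprMn (sqr_sqrtr (d0 n)) /c /K /d; apply: eqle.
    set x := specnorm _ / _; field; by rewrite gt_eqF.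
- move=> e e0pos.
  have L : (fun n => K * d n / e0 + C * K * d n / e ^+ 2 * (e * 1)) @ \oo -->
           (K * 0 / e0 + C * K * 0 / e ^+ 2 * (e * 1)).
    apply: cvgD; first by apply: cvgMr_tmp; apply: cvgMl_tmp; exact: hd.
    by apply: cvgMr_tmp; apply: cvgMr_tmp; apply: cvgMl_tmp; exact: hd.
  rewrite !mulr0 !mul0r addr0 in L.
  apply: (squeeze_cvgr _ (cvg_cst 0) L).
  exists N => // n /= hn; rewrite Prob_ge0 //=.
  apply: (op_bound _ (HP n) (Hpi n) _ _ _ _ _ _ _ _ C0 e00 (hF n hn) (hC' n)).
  + by rewrite mulr1 ltW.
  + apply: mulr_ge0; last by rewrite invr_ge0 exprn_ge0 // ltW.
    by apply: mulr_ge0 => //; apply: mulr_ge0 => //; exact: ltW.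
  + rewrite /K /d; apply: eqle.
    set x := specnorm _ / _; field; by rewrite gt_eqF.
- by move=> n _ a b; exact: (Cov_muL _ (HP n)).
- move=> [Bz [Nz hBz]].
  have hB : forall n, (maxn Nz 1 <= n)%N -> forall a b : 'I_k,
     `|Cov (P n) (fun w => muL (phi n) (F n) (dF n) (P n) w a)
                 (fun w => muL (phi n) (F n) (dF n) (P n) w b)|
       <= Num.max Bz 0 * (specnorm (Dmat (P n)) / n%:R).
    move=> n; rewrite geq_max => /andP[hn1 hn2] a b.
    apply: (Cov_muL_bound _ (HP n)) => //.
    have hn : 0 < n%:R :> R by rewrite ltr0n.
    set S := \sum_t _.
    have := hBz n hn1; rewrite -/S => hS.
    have -> : S = n%:R * (n%:R^-1 * S) by rewrite mulrA mulfV ?mul1r // gt_eqF.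
    apply: ler_wpM2l; first exact: ltW.
    apply: le_trans (ler_norm _) _; apply: le_trans hS _.
    by rewrite le_max lexx.
  split; first by exists (Num.max Bz 0), (maxn Nz 1).
  move=> [Bs [Ns hBs]].
  exists (Num.max Bz 0 * Num.max Bs 0), (maxn (maxn Nz 1) Ns) => n.
  rewrite geq_max => /andP[hn1 hn2] a b.
  apply: le_trans (hB n hn1 a b) _.
  rewrite -mulrA; apply: ler_wpM2l; first by rewrite le_max lexx orbT.
  apply: ler_wpM2r; first by rewrite invr_ge0.
  apply: le_trans (ler_norm _) _; apply: le_trans (hBs n hn2) _.
  by rewrite le_max lexx.
Qed.
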